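(* Let $\mathrm{FiF}$ and $\mathrm{OFF}$ be as in the context, serving $q_1,\dots,q_T$ with cache size $k$. For $1\le t\le T$ let $\mathrm{Bel}_t,\mathrm{Off}_t\in\{0,1\}$ be the number of pages fetched by $\mathrm{FiF}$ and by $\mathrm{OFF}$, respectively, when serving $q_t$. Then for every $1\le t\le T$, $$\mathrm{Bel}_t+\Phi(t+1)-\Phi(t)\le \mathrm{Off}_t,$$ and $\Phi(t)\ge 0$ for all $t$. Consequently the total number of fetches of $\mathrm{FiF}$ is at most that of $\mathrm{OFF}$ plus $\Phi(1)$.
   Context: Unweighted paging with a universe $U$ of $n$ pages, cache size $k<n$, and request sequence $q_1,\dots,q_T$. Fix a total order on $U$. For $1\le t\le T+1$, $\mathrm{rank}(\cdot,t)$ is the bijection $U\to\{1,\dots,n\}$ obtained by ordering pages increasingly by the time of their next request in $\{t,\dots,T\}$, with pages not requested in $\{t,\dots,T\}$ placed last, in the fixed order (so $\mathrm{rank}(q_t,t)=1$). $\mathrm{FiF}$ always holds exactly $k$ pages; on a request $q_t$ not in its cache it loads $q_t$ and evicts the page of its cache with the largest $\mathrm{rank}(\cdot,t)$. $\mathrm{OFF}$ is an arbitrary algorithm always holding exactly $k$ pages and containing $q_t$ after serving it. Let $C(t)$, $C^*(t)$ be the caches of $\mathrm{FiF}$ and $\mathrm{OFF}$ just before request $q_t$ is served (for $t=T+1$: after serving $q_T$). Let $n(s,t)=|\{p\in C(t):\mathrm{rank}(p,t)\ge s\}|$, $n^*(s,t)=|\{p\in C^*(t):\mathrm{rank}(p,t)\ge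 s\}|$, and $\Phi(t)=\max_{1\le s\le n}\big(n(s,t)-n^*(s,t)\big)$. *)

(* Defs.v *)
(* Pages are 'I_n; the fixed total order on U is the natural
   order of ordinals (any finite totally ordered U is isomorphic to this). *)
From mathcomp Require Import all_boot all_order all_algebra.
Set Implicit Arguments. Unset Strict Implicit. Unset Printing Implicit Defensive.
Import Order.TTheory GRing.Theory Num.Theory.

(* Requests are q 1, ..., q T (values of q outside [1,T] are never read). *)

(* time of the next request of p in {t,...,T}; T.+1 if p is not requested *)
Definition nextreq n (q : nat -> 'I_n) (T t : nat) (p : 'I_n) : nat :=
  head T.+1 [seq t' <- iota t (T.+1 - t) | q t' == p].

(* rank(p,t) in {1,...,n}: order pages increasingly by next request time,
   ties (only among pages not requested in {t..T}) broken by the fixed order *)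
Definition rank n (q : nat -> 'I_n) (T t : nat) (p : 'I_n) : nat :=
  #|[set p' : 'I_n | (nextreq q T t p' < nextreq q T t p)
                     || ((nextreq q T t p' == nextreq q T t p) && (p' < p))]|.+1.

Definition ncount n (q : nat -> 'I_n) (T : nat) (C : {set 'I_n}) (s t : nat)
  : nat := #|[set p in C | s <= rank q T t p]|.

Definition Phi n (q : nat -> 'I_n) (T : nat) (C Cs : {set 'I_n}) (t : nat)
  : int :=
  let d s := ((ncount q T C s t)%:Z - (ncount q T Cs s t)%:Z)%R in
  \big[Num.max/d 1%N]_(1 <= s < n.+1) d s.

Definition fetched n (A B : {set 'I_n}) : nat := #|B :\: A|.

Definition fif_step n (q : nat -> 'I_n) (T t : nat) (A B : {set 'I_n}) : Prop :=
  if q t \in A then B = A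
  else exists e, [/\ e \in A,
                    (forall p, p \in A -> rank q T t p <= rank q T t e)
                  & B = q t |: (A :\ e)].

(* Main.v *)
Require Import Defs.
From mathcomp Require Import all_boot all_order all_algebra zify.
Import Order.TTheory GRing.Theory Num.Theory.
Module Aux.
Set Implicit Arguments. Unset Strict Implicit. Unset Printing Implicit Defensive.

Section S.
Variables (n : nat) (q : nat -> 'I_n) (T : nat).

Definition before t (a b : 'I_n) : bool :=
  (nextreq q T t a < nextreq q T t b)
  || ((nextreq q T t a == nextreq q T t b) && (a < b)).

Definition Sb t p := [set p' | before t p' p].

Lemma rankE t p : rank q T t p = #|Sb t p|.+1.
Proof. by []. Qed.

Lemma before_irr t a : ~~ before t a a.
Proof. by rewrite /before ltnn eqxx ltnn. Qed.

Lemma before_trans t a b c : before t a b -> before t b c -> before t a c.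
Proof.
rewrite /before => /orP[H1|/andP[/eqP H1 H1']] /orP[H2|/andP[/eqP H2 H2']];
 apply/orP.
- left; lia.
- left; lia.
- left; lia.
- right; apply/andP; split; [apply/eqP; lia | lia].
Qed.

Lemma before_total t a b : a != b -> before t a b || before t b a.
Proof.
move=> /eqP ne; rewrite /before.
case: (ltngtP (nextreq q T t a) (nextreq q T t b)) => H //=; rewrite ?orbT //.
case: (ltngtP a b) => H' //=.
by exfalso; apply: ne; apply: val_inj.
Qed.

Lemma before_rank t a b : before t a b -> rank q T t a < rank q T t b.
Proof.
move=> ab; rewrite !rankE ltnS; apply: proper_card; apply/properP; split.
- apply/subsetP => x; rewrite !inE => xa; exact: before_trans xa ab.
- by exists a; rewrite !inE ?ab // before_irr.
Qed.

Lemma rank_le t p : rank q T t p <= n.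
Proof.
rewrite rankE.
have : Sb t p \subset [set~ p].
  by apply/subsetP => x; rewrite !inE; apply: contraTneq => ->; rewrite before_irr.
move/subset_leq_card; rewrite cardsC1 card_ord.
move: (ltn_ord p); lia.
Qed.

Lemma nextreq_ge t p : t <= T.+1 -> t <= nextreq q T t p.
Proof.
move=> tT.
rewrite /nextreq.
case E: [seq t' <- iota t (T.+1 - t) | q t' == p] => [|x s] /=.
- done.
- have : x \in [seq t' <- iota t (T.+1 - t) | q t' == p] by rewrite E inE eqxx.
  by rewrite mem_filter mem_iota => /andP[_ /andP[]].
Qed.

Section Step.
Variable t : nat.
Hypothesis tT : t <= T.
Let q0 := q t.

Lemma iotaS_t : iota t (T.+1 - t) = t :: iota t.+1 (T.+1 - t.+1).
Proof. have -> : T.+1 - t = (T.+1 - t.+1).+1 by lia. by []. Qed.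

Lemma next_q0 : nextreq q T t q0 = t.
Proof. by rewrite /nextreq iotaS_t /= eqxx. Qed.

Lemma next_other p : p != q0 -> nextreq q T t p = nextreq q T t.+1 p.
Proof. move=> ne; rewrite /nextreq iotaS_t /= eq_sym (negbTE ne) //. Qed.

Lemma next_gt p : t < nextreq q T t.+1 p.
Proof. by apply: nextreq_ge. Qed.

Lemma before_q0 p : p != q0 -> before t q0 p.
Proof. move=> ne; rewrite /before next_q0 next_other //; by rewrite next_gt. Qed.

Lemma not_before_q0 p : ~~ before t p q0.
Proof.
rewrite /before next_q0.
have [->|ne] := eqVneq p q0; first by rewrite next_q0 ltnn eqxx ltnn.
rewrite next_other //; have := next_gt p.
case: ltngtP => //.
Qed.

Lemma rank_q0 : rank q T t q0 = 1.
Proof.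
rewrite rankE; apply/eqP; rewrite eqSS cards_eq0; apply/eqP/setP => x.
by rewrite !inE (negbTE (not_before_q0 x)).
Qed.

Lemma rank_other p : p != q0 -> 2 <= rank q T t p.
Proof. move=> ne; have := before_rank (before_q0 ne); by rewrite rank_q0. Qed.

Lemma rank_ge2 p : (2 <= rank q T t p) = (p != q0).
Proof.
apply/idP/idP; last exact: rank_other.
by apply: contraTneq => ->; rewrite rank_q0.
Qed.

Lemma rank_shift p : p != q0 ->
  rank q T t p = rank q T t.+1 p + before t.+1 p q0.
Proof.
move=> ne.
have E : Sb t p = q0 |: (Sb t.+1 p :\ q0).
  apply/setP => x; rewrite !inE.
  have [->|xne] := eqVneq x q0; first by rewrite /= before_q0.
  by rewrite /= /before !next_other.
rewrite !rankE E cardsU1 !inE eqxx /=.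
have := cardsD1 q0 (Sb t.+1 p); rewrite inE.
have := before_total t.+1 ne; rewrite eq_sym in ne.
have := before_total t.+1 ne.
case Hb1: (before t.+1 q0 p); case Hb2: (before t.+1 p q0) => //=.
- by have := before_irr t.+1 p; rewrite (before_trans Hb2 Hb1).
- lia.
- lia.
Qed.

Lemma rank_cmp p : p != q0 ->
  if before t.+1 p q0 then rank q T t.+1 p < rank q T t.+1 q0
  else rank q T t.+1 q0 < rank q T t.+1 p.
Proof.
move=> ne; case Hb: (before t.+1 p q0); first exact: before_rank.
rewrite eq_sym in ne; have := before_total t.+1 ne; rewrite Hb orbF.
exact: before_rank.
Qed.

Lemma ncount_shift (X : {set 'I_n}) s : 0 < s -> q0 \in X ->
  ncount q T X s t.+1 =
  if s <= rank q T t.+1 q0 then (ncount q T X s.+1 t).+1 else ncount q T X s t.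
Proof.
move=> s0 qX; rewrite /ncount; case: ifP => sr.
- have -> : [set p in X | s <= rank q T t.+1 p] =
            q0 |: [set p in X | s.+1 <= rank q T t p].
    apply/setP => p; rewrite !inE.
    have [->|ne] := eqVneq p q0; first by rewrite qX sr.
    rewrite /= rank_shift //; have := rank_cmp ne.
    case: (before t.+1 p q0) => /=; lia.
  rewrite cardsU1 !inE rank_q0. have -> : (s < 1) = false by lia.
  by rewrite andbF.
- apply: eq_card => p; rewrite !inE.
  have [->|ne] := eqVneq p q0; first by rewrite sr rank_q0; move: sr s0; case: s => [|[]].
  rewrite /= rank_shift //; have := rank_cmp ne.
  case: (before t.+1 p q0) => /=; lia.
Qed.
End Step.
End S.

Lemma le_bigmaxZ (r : seq nat) (F : nat -> int) x0 i :
  i \in r -> (F i <= \big[Num.max/x0]_(j <- r) F j)%R.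
Proof.
elim: r => //= a r IH; rewrite inE big_cons le_max => /orP[/eqP->|/IH ->];
  by rewrite ?lexx ?orbT.
Qed.

Lemma ge_bigmaxZ (r : seq nat) (F : nat -> int) x0 :
  (x0 <= \big[Num.max/x0]_(j <- r) F j)%R.
Proof.
elim: r => /= [|a r IH]; first by rewrite big_nil.
by rewrite big_cons le_max IH orbT.
Qed.

Section P.
Variables (n : nat) (q : nat -> 'I_n) (T : nat).

Definition D (C Cs : {set 'I_n}) t s : int :=
  ((ncount q T C s t)%:Z - (ncount q T Cs s t)%:Z)%R.

Lemma PhiE (C Cs : {set 'I_n}) t :
  Phi q T C Cs t = \big[Num.max/D C Cs t 1]_(1 <= s < n.+1) D C Cs t s.
Proof. by []. Qed.

Lemma Phi_le (C Cs : {set 'I_n}) t (M : int) :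
  (forall s, (1 <= s <= n)%N -> (D C Cs t s <= M)%R) -> (D C Cs t 1 <= M)%R ->
  (Phi q T C Cs t <= M)%R.
Proof.
move=> H H1; rewrite PhiE big_seq.
apply: (big_ind (fun v => v <= M)%R) => //.
  by move=> x y xM yM; rewrite ge_max xM yM.
move=> i; rewrite mem_index_iota => /andP[i1 i2]; apply: H; lia.
Qed.

Lemma ncount1 (X : {set 'I_n}) t : ncount q T X 1 t = #|X|.
Proof. by rewrite /ncount; apply: eq_card => p; rewrite !inE andbT. Qed.

Lemma ncount_big (X : {set 'I_n}) t : ncount q T X n.+1 t = 0.
Proof.
rewrite /ncount; apply/eqP; rewrite cards_eq0; apply/eqP/setP => p.
by rewrite !inE ltnNge rank_le andbF.
Qed.

Lemma le_Phi (C Cs : {set 'I_n}) t s : #|C| = #|Cs| -> 1 <= s <= n.+1 ->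
  (D C Cs t s <= Phi q T C Cs t)%R.
Proof.
move=> eqc /andP[s1 s2]; rewrite PhiE.
have [sn|sn] : s < n.+1 \/ s = n.+1 by lia.
- by apply: le_bigmaxZ; rewrite mem_index_iota s1.
- apply: le_trans _ (ge_bigmaxZ _ _ _).
  by rewrite /D sn !ncount_big !ncount1 eqc !subrr.
Qed.

Lemma Phi_ge0 (C Cs : {set 'I_n}) t : #|C| = #|Cs| -> (0 <= Phi q T C Cs t)%R.
Proof.
move=> eqc; apply: le_trans _ (ge_bigmaxZ _ _ _).
by rewrite /D !ncount1 eqc !subrr.
Qed.

Lemma ncount2 (X : {set 'I_n}) t : t <= T -> ncount q T X 2 t = #|X :\ q t|.
Proof.
move=> tT; rewrite /ncount; apply: eq_card => p; rewrite !inE rank_ge2 //.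
by rewrite andbC.
Qed.

Lemma off_le (Cs Cs' : {set 'I_n}) s t : #|Cs| = #|Cs'| ->
  ncount q T Cs s t <= ncount q T Cs' s t + fetched Cs Cs'.
Proof.
move=> eqc; rewrite /ncount /fetched.
have sub : [set p in Cs | s <= rank q T t p] \subset
           [set p in Cs' | s <= rank q T t p] :|: (Cs :\: Cs').
  apply/subsetP => p; rewrite !inE => /andP[pC ->].
  by rewrite pC; case: (p \in Cs').
apply: leq_trans (subset_leq_card sub) _.
rewrite cardsU.
have : #|Cs :\: Cs'| = #|Cs' :\: Cs| by rewrite !cardsD setIC eqc.
lia.
Qed.
End P.

Section M.
Variables (n : nat) (q : nat -> 'I_n) (T : nat).

Lemma fif_props t (C C' : {set 'I_n}) : fif_step q T t C C' ->
  #|C'| = #|C| /\ q t \in C'.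
Proof.
rewrite /fif_step; case: ifP => qC; first by move=> ->.
case=> e [eC _ ->]; rewrite cardsU1 !inE eqxx; split => //.
by rewrite qC andbF /= (cardsD1 e C) eC.
Qed.

Lemma mid t (C C' Cs Cs' : {set 'I_n}) k s : t <= T ->
  #|C| = k -> #|Cs| = k -> #|Cs'| = k -> fif_step q T t C C' ->
  q t \in Cs' -> 1 <= s <= n.+1 ->
  (D q T C' Cs' t s <= Phi q T C Cs t - (fetched C C')%:Z
                        + (fetched Cs Cs')%:Z)%R.
Proof.
move=> tT hC hCs hCs' hf qCs' /andP[s1 s2].
have offs := @off_le n q T Cs Cs' s t (etrans hCs (esym hCs')).
have hP := @le_Phi n q T C Cs t s (etrans hC (esym hCs)).
move: hf; rewrite /fif_step; case: ifP => qC.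
- move=> ->; rewrite /fetched setDv cards0.
  move: offs (hP (introT andP (conj s1 s2))); rewrite /D /fetched; lia.
case=> e [eC emax ->].
set C2 := q t |: (C :\ e).
have fe : fetched C C2 = 1.
  rewrite /fetched -(cards1 (q t)); apply: eq_card => p; rewrite !inE.
  have [->|pq] := eqVneq p (q t); first by rewrite qC.
  by case: (p \in C); rewrite /= ?andbF.
have n1 : 1 <= n by move: (ltn_ord (q t)); lia.
have hP2 := @le_Phi n q T C Cs t 2 (etrans hC (esym hCs)).
have offs2 := @off_le n q T Cs Cs' 2 t (etrans hCs (esym hCs')).
have c1 := cardsD1 (q t) C; have c2 := cardsD1 (q t) Cs'.
rewrite qC qCs' /= in c1 c2.
have hPh : (1 - (fetched Cs Cs')%:Z <= Phi q T C Cs t)%R.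
  move: hP2 offs2; rewrite /D !ncount2 // => hP2 offs2.
  have := hP2 (ltac:(lia)); move=> HH. rewrite hC in c1; rewrite hCs' in c2. set a := #|C :\ q t| in HH c1. set b := #|Cs :\ q t| in HH offs2. set c := #|Cs' :\ q t| in c2 offs2. lia.
rewrite fe.
have cC2 : #|C2| = k.
  rewrite -hC /C2 cardsU1 !inE qC andbF /= (cardsD1 e C) eC; by [].
have [->|s2'] := eqVneq s 1.
  rewrite /D !ncount1 hCs' cC2 subrr.
  move: hPh; set P := Phi q T C Cs t; set f := fetched Cs Cs'; lia.
have [sre|sre] := leqP s (rank q T t e).
- have E : [set p in C2 | s <= rank q T t p] = [set p in C | s <= rank q T t p] :\ e.
    apply/setP => p; rewrite !inE.
    have [->|pq] := eqVneq p (q t).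
      rewrite rank_q0 // qC /=; lia.
    by rewrite /=; case: (p \in C); case: (p == e).
  have c3 := cardsD1 e [set p in C | s <= rank q T t p]; rewrite !inE eC sre /= in c3.
  have := hP (ltac:(lia)); rewrite /D /ncount E.
  move: offs; rewrite /ncount.
  set a := #|[set p in C | s <= rank q T t p]| in c3 *.
  set b := #|[set p in C | s <= rank q T t p] :\ e| in c3 *.
  set c := #|[set p in Cs | s <= rank q T t p]|.
  set d := #|[set p in Cs' | s <= rank q T t p]|.
  set P := Phi q T C Cs t; set f := fetched Cs Cs'; lia.
- have E : [set p in C2 | s <= rank q T t p] = set0.
    apply/setP => p; rewrite !inE.
    have [->|pq] := eqVneq p (q t).
      rewrite rank_q0 //=; lia.
    rewrite /=; case pC: (p \in C); rewrite ?andbF //=.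
    have := emax p pC; lia.
  rewrite /D /ncount E cards0.
  move: hPh; set P := Phi q T C Cs t; set f := fetched Cs Cs'; lia.
Qed.

Lemma step t (C C' Cs Cs' : {set 'I_n}) k : t <= T ->
  #|C| = k -> #|Cs| = k -> #|Cs'| = k -> fif_step q T t C C' ->
  q t \in Cs' ->
  ((fetched C C')%:Z + Phi q T C' Cs' t.+1 - Phi q T C Cs t
     <= (fetched Cs Cs')%:Z)%R.
Proof.
move=> tT hC hCs hCs' hf qCs'.
have [_ qC'] := fif_props hf.
have H : forall s, 1 <= s <= n ->
   (D q T C' Cs' t.+1 s <= Phi q T C Cs t - (fetched C C')%:Z
                        + (fetched Cs Cs')%:Z)%R.
  move=> s /andP[s1 sn].
  rewrite /D !(ncount_shift tT) //.
  case: ifP => _.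
  + have := mid tT hC hCs hCs' hf qCs' (s := s.+1) (ltac:(lia)).
    rewrite /D; set P := Phi q T C Cs t; set f := fetched Cs Cs'; set g := fetched C C'.
    set a := ncount q T C' s.+1 t; set b := ncount q T Cs' s.+1 t; lia.
  + by have := mid tT hC hCs hCs' hf qCs' (s := s) (ltac:(lia)).
have n1 : 1 <= n by move: (ltn_ord (q t)); lia.
have := Phi_le H (H 1 (ltac:(lia))).
set P := Phi q T C Cs t; set f := fetched Cs Cs'; set g := fetched C C'.
set P' := Phi q T C' Cs' t.+1; lia.
Qed.
End M.
End Aux.
Import Aux.

Theorem mainTheorem11 (n k T : nat) (q : nat -> 'I_n)
    (C Cs : nat -> {set 'I_n}) :
  k < n ->
  #|C 1| = k ->
  (forall t, 1 <= t <= T -> fif_step q T t (C t) (C t.+1)) ->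
  (forall t, 1 <= t <= T.+1 -> #|Cs t| = k) ->
  (forall t, 1 <= t <= T -> q t \in Cs t.+1) ->
  (forall t, 1 <= t <= T -> fetched (Cs t) (Cs t.+1) <= 1) ->
  [/\ (forall t, 1 <= t <= T ->
         ((fetched (C t) (C t.+1))%:Z + Phi q T (C t.+1) (Cs t.+1) t.+1
            - Phi q T (C t) (Cs t) t <= (fetched (Cs t) (Cs t.+1))%:Z)%R),
      (forall t, 1 <= t <= T.+1 -> (0 <= Phi q T (C t) (Cs t) t)%R)
    & ((\sum_(1 <= t < T.+1) fetched (C t) (C t.+1))%:Z
         <= (\sum_(1 <= t < T.+1) fetched (Cs t) (Cs t.+1))%:Z
            + Phi q T (C 1%N) (Cs 1%N) 1%N)%R].
Proof.
move=> kn hC1 hf hCs hq _.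
have cardC : forall t, 1 <= t <= T.+1 -> #|C t| = k.
  elim => // t IH /andP[_ tT].
  case: t IH tT => [|t] IH tT; first by [].
  have [c _] := fif_props (hf t.+1 (ltac:(lia))).
  rewrite c; apply: IH; lia.
have st : forall t, 1 <= t <= T ->
         ((fetched (C t) (C t.+1))%:Z + Phi q T (C t.+1) (Cs t.+1) t.+1
            - Phi q T (C t) (Cs t) t <= (fetched (Cs t) (Cs t.+1))%:Z)%R.
  move=> t ht; apply: (step (k := k)); try lia.
  - by apply: cardC; lia.
  - by apply: hCs; lia.
  - by apply: hCs; lia.
  - by apply: hf.
  - by apply: hq.
have ge : forall t, 1 <= t <= T.+1 -> (0 <= Phi q T (C t) (Cs t) t)%R.
  move=> t ht; apply: Phi_ge0; rewrite cardC // hCs //.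
split => //.
have tel : forall m, m <= T ->
  ((\sum_(1 <= t < m.+1) fetched (C t) (C t.+1))%:Z + Phi q T (C m.+1) (Cs m.+1) m.+1
   <= (\sum_(1 <= t < m.+1) fetched (Cs t) (Cs t.+1))%:Z
            + Phi q T (C 1%N) (Cs 1%N) 1%N)%R.
  elim => [|m IH] hm.
    by rewrite !big_geq.
  rewrite !(big_nat_recr m.+1) //= !PoszD.
  have := IH (ltac:(lia)); have := st m.+1 (ltac:(lia)).
  set a := (\sum_(1 <= t < m.+1) fetched (C t) (C t.+1)).
  set b := (\sum_(1 <= t < m.+1) fetched (Cs t) (Cs t.+1)).
  set P1 := Phi q T (C 1%N) (Cs 1%N) 1%N.
  set P2 := Phi q T (C m.+1) (Cs m.+1) m.+1.
  set P3 := Phi q T (C m.+2) (Cs m.+2) m.+2.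
  set f := fetched (C m.+1) (C m.+2).
  set g := fetched (Cs m.+1) (Cs m.+2).
  lia.
have := tel T (leqnn _); have := ge T.+1 (ltac:(lia)).
set a := (\sum_(1 <= t < T.+1) fetched (C t) (C t.+1)).
set b := (\sum_(1 <= t < T.+1) fetched (Cs t) (Cs t.+1)).
set P1 := Phi q T (C 1%N) (Cs 1%N) 1%N.
set P2 := Phi q T (C T.+1) (Cs T.+1) T.+1.
lia.
Qed.
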